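(* Let $G$ be a finite undirected graph, $\tau\ge1$ an integer, and $G'$ a subgraph of $G$. Then for every edge $e\in E(G')$, $\phi_\tau(e,G)\ge\phi_\tau(e,G')$.
   Context: Graphs are finite, simple, undirected and unweighted; paths may repeat vertices and their length is the number of edges. For vertices $v,u$ of a graph $H$, $u$ is $\tau$-hop reachable from $v$ in $H$ if there is a path between them in $H$ of length at most $\tau$. $N_\tau(v,H)$ is the set of vertices $u\ne v$ that are $\tau$-hop reachable from $v$ in $H$. For an edge $e=(u,v)$ of $H$, $\Delta_\tau(e,H)=N_\tau(u,H)\cap N_\tau(v,H)$ and $\mathrm{sup}_\tau(e,H)=|\Delta_\tau(e,H)|$. The $(k,\tau)$-truss of a graph $H$ is the maximal subgraph $H'$ of $H$ such that $\mathrm{sup}_\tau(e,H')\ge k-2$ for every $e\in E(H')$ (supports computed inside $H'$) and no more edges of $H$ can be added while keeping this property. The higher-order truss number $\phi_\tau(e,H)$ of an edge $e$ of $H$ is the maximum $k$ such that $e$ belongs to the $(k,\tau)$-truss of $H$. *)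

(* Defs.v *)
From mathcomp Require Import all_boot.
Set Implicit Arguments. Unset Strict Implicit. Unset Printing Implicit Defensive.

Section HOT.
Variable T : finType.

Definition simple_graph (V : {set T}) (E : {set {set T}}) : Prop :=
  forall e, e \in E -> exists x y, [/\ x != y, x \in V, y \in V & e = [set x; y]].

Definition adj (E : {set {set T}}) : rel T := fun x y => [set x; y] \in E.

(* u is tau-hop reachable from v: a walk (vertices may repeat) of length <= tau *)
Definition hop_reach (tau : nat) (E : {set {set T}}) (v u : T) : bool :=
  [exists n : 'I_tau.+1, exists s : (val n).-tuple T,
     path (adj E) v s && (last v s == u)].

Definition Nhood (tau : nat) (E : {set {set T}}) (v : T) : {set T} :=
  [set u | (u != v) && hop_reach tau E v u].

Definition Delta (tau : nat) (E : {set {set T}}) (e : {set T}) : {set T} :=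
  \bigcap_(x in e) Nhood tau E x.

Definition sup (tau : nat) (E : {set {set T}}) (e : {set T}) : nat :=
  #|Delta tau E e|.

Definition truss_prop (tau k : nat) (F : {set {set T}}) : bool :=
  [forall e in F, k - 2 <= sup tau F e].

Definition is_truss (tau k : nat) (E F : {set {set T}}) : bool :=
  [&& F \subset E, truss_prop tau k F &
      [forall F' : {set {set T}},
         ((F \subset F') && (F' \subset E) && truss_prop tau k F') ==> (F' == F)]].

Definition in_truss (tau k : nat) (E : {set {set T}}) (e : {set T}) : bool :=
  [exists F : {set {set T}}, is_truss tau k E F && (e \in F)].

(* phi_tau(e,H): largest k with e in the (k,tau)-truss.  Every k with a
   nonempty truss satisfies k <= #|T| (supports are <= #|T| - 2), so the
   maximum over k < #|T|+3 is the true maximum. *)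
Definition phi (tau : nat) (E : {set {set T}}) (e : {set T}) : nat :=
  \max_(k < #|T|.+3 | in_truss tau k E e) k.

End HOT.

(* Main.v *)
Require Import Defs.
From mathcomp Require Import all_boot.

Lemma in_truss_mono (T : finType) (E E' : {set {set T}}) tau k e :
  E' \subset E -> in_truss tau k E' e -> in_truss tau k E e.
Proof.
move=> sE /existsP [F /andP [/and3P [sF tF _] eF]].
have P0 : (F \subset F) && (F \subset E) && truss_prop tau k F.
  by rewrite subxx (subset_trans sF sE) tF.
case: (@arg_maxnP _ F (fun G => (F \subset G) && (G \subset E) && truss_prop tau k G)
          (fun G => #|G|) P0) => G /andP [/andP [sFG sGE] tG] Gmax.
apply/existsP; exists G; rewrite (subsetP sFG) // andbT.
apply/and3P; split => //.
apply/forallP => F'; apply/implyP => /andP [/andP [sGF' sF'E] tF'].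
rewrite eq_sym eqEcard sGF' /=.
apply: Gmax; by rewrite (subset_trans sFG sGF') sF'E.
Qed.

Theorem lemma2 (T : finType) (V V' : {set T}) (E E' : {set {set T}}) (tau : nat) :
  1 <= tau ->
  simple_graph V E -> simple_graph V' E' ->
  V' \subset V -> E' \subset E ->
  forall e, e \in E' -> phi tau E' e <= phi tau E e.
Proof.
move=> _ _ _ _ sE e _; rewrite /phi.
apply/bigmax_leqP => i Hi.
have := @in_truss_mono T E E' tau i e sE Hi.
exact: (leq_bigmax_cond (F := fun k : 'I_#|T|.+3 => nat_of_ord k)).
Qed.
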